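(* Let $\alpha\in(0,1)$ be irrational with $\alpha=[0;a_1,a_2,\dots]$. For each $n\ge1$ define the block $C_n$ by: if $a_n\ge2$, $C_n=(q_{n-2}+q_{n-1},\,q_{n-2}+2q_{n-1},\,\dots,\,q_{n-2}+(a_n-1)q_{n-1})$ (the $a_n-1$ numbers $q_{n-2}+jq_{n-1}$, $1\le j\le a_n-1$); if $a_n=1$, $C_n=(2q_{n-2}+q_{n-1})$. Then the concatenation $C_1,C_2,C_3,\dots$, after deleting repeated values, is exactly the increasing enumeration $\mathfrak x_1=1<\mathfrak x_2<\cdots$ of $\mathfrak X$.
   Context: Let $\alpha$ be an irrational real number in $(0,1)$ with continued fraction expansion $\alpha=[0;a_1,a_2,\dots]$ (the $a_i$ positive integers). Convergents: $p_n/q_n=[0;a_1,\dots,a_n]$ for $n\ge1$, with $p_{-1}=1,q_{-1}=0,p_0=0,q_0=1$, so that $q_n=a_nq_{n-1}+q_{n-2}$ and $p_n=a_np_{n-1}+p_{n-2}$. For real $t\ge1$ define $\psi^{[2]*}_\alpha(t)=\min\{|q\alpha-p| : p,q\in\mathbb Z,\ 1\le q\le t,\ p/q\ne p_n/q_n\text{ for all }n\ge0\}$. Let $\mathfrak X$ be the set consisting of $1$ together with all integers $t\ge2$ such that $\psi^{[2]*}_\alpha(t)<\psi^{[2]*}_\alpha(t-1)$ (the points of discontinuity of $\psi^{[2]*}_\alpha$), enumerated increasingly as $\mathfrak x_1=1<\mathfrak x_2<\cdots$. *)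

(* Defs.v *)
From Stdlib Require Import Reals ZArith Arith List Lia Lra.
Import ListNotations.
Open Scope R_scope.

Fixpoint cf_rem (alpha : R) (n : nat) : R :=
  match n with
  | O => alpha
  | S m => / cf_rem alpha m - IZR (Int_part (/ cf_rem alpha m))
  end.

(* Partial quotients a_n = floor(1/r_{n-1}) for n >= 1 (so alpha = [0; a_1, a_2, ...]). *)
Definition cf_a (alpha : R) (n : nat) : nat :=
  Z.to_nat (Int_part (/ cf_rem alpha (pred n))).

(* Shifted denominators/numerators: qq k = q_{k-1}, pp k = p_{k-1}
   (so qq 0 = q_{-1} = 0, qq 1 = q_0 = 1, pp 0 = p_{-1} = 1, pp 1 = p_0 = 0). *)
Fixpoint qq (alpha : R) (k : nat) : nat :=
  match k with
  | O => 0%nat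
  | S O => 1%nat
  | S ((S m) as k') => (cf_a alpha k' * qq alpha k' + qq alpha m)%nat
  end.

Fixpoint pp (alpha : R) (k : nat) : nat :=
  match k with
  | O => 1%nat
  | S O => 0%nat
  | S ((S m) as k') => (cf_a alpha k' * pp alpha k' + pp alpha m)%nat
  end.

(* p/q differs from every convergent p_n/q_n, n >= 0 (cross-multiplied, q >= 1). *)
Definition not_convergent (alpha : R) (p q : Z) : Prop :=
  forall n : nat,
    (p * Z.of_nat (qq alpha (S n)) <> Z.of_nat (pp alpha (S n)) * q)%Z.

Definition admissible (alpha t : R) (p q : Z) : Prop :=
  (1 <= q)%Z /\ IZR q <= t /\ not_convergent alpha p q.

(* m is the minimum defining psi^{[2]*}_alpha(t). *)
Definition is_psi2star (alpha t m : R) : Prop :=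
  (exists p q, admissible alpha t p q /\ Rabs (IZR q * alpha - IZR p) = m) /\
  (forall p q, admissible alpha t p q -> m <= Rabs (IZR q * alpha - IZR p)).

(* Membership in the set X of discontinuity points. *)
Definition inX (alpha : R) (t : nat) : Prop :=
  t = 1%nat \/
  ((2 <= t)%nat /\
   exists m1 m2, is_psi2star alpha (INR t) m1 /\
                 is_psi2star alpha (INR t - 1) m2 /\ m1 < m2).

(* x is the j-th element (0-indexed) of X in increasing order. *)
Definition X_nth (alpha : R) (j x : nat) : Prop :=
  inX alpha x /\
  exists l : list nat, NoDup l /\ (forall y, In y l <-> (y < x)%nat /\ inX alpha y)
                       /\ length l = j.

Definition block (alpha : R) (n : nat) : list nat :=
  if (2 <=? cf_a alpha n)%nat
  then map (fun j => (qq alpha (pred n) + j * qq alpha n)%nat) (seq 1 (cf_a alpha n - 1))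
  else [(2 * qq alpha (pred n) + qq alpha n)%nat].

Definition blocks_prefix (alpha : R) (N : nat) : list nat :=
  concat (map (block alpha) (seq 1 N)).

Fixpoint dedup_aux (seen : list nat) (l : list nat) : list nat :=
  match l with
  | [] => []
  | x :: l' => if existsb (Nat.eqb x) seen then dedup_aux seen l'
               else x :: dedup_aux (x :: seen) l'
  end.

Definition dedup_first (l : list nat) : list nat := dedup_aux [] l.

Definition C_dedup_nth (alpha : R) (j x : nat) : Prop :=
  exists N, nth_error (dedup_first (blocks_prefix alpha N)) j = Some x.

Definition irrational (alpha : R) : Prop :=
  ~ exists p q : Z, q <> 0%Z /\ alpha = IZR p / IZR q.

(* Main.v *)
Require Import Defs.
From Stdlib Require Import Reals ZArith Arith List Lia Lra Classical Sorting.Sorted.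
Import ListNotations.
Open Scope R_scope.

Open Scope R_scope.

Definition Q (al : R) (k : nat) : Z := Z.of_nat (qq al k).
Definition P (al : R) (k : nat) : Z := Z.of_nat (pp al k).
Definition E (al : R) (k : nat) : R := IZR (Q al k) * al - IZR (P al k).
Definition d (al : R) (k : nat) : R := Rabs (E al k).

Lemma qq_rec al k : qq al (S (S k)) = (cf_a al (S k) * qq al (S k) + qq al k)%nat.
Proof. reflexivity. Qed.
Lemma pp_rec al k : pp al (S (S k)) = (cf_a al (S k) * pp al (S k) + pp al k)%nat.
Proof. reflexivity. Qed.

Lemma E_rec al k : E al (S (S k)) = INR (cf_a al (S k)) * E al (S k) + E al k.
Proof.
  unfold E, Q, P. rewrite qq_rec, pp_rec.
  rewrite !Nat2Z.inj_add, !Nat2Z.inj_mul, !plus_IZR, !mult_IZR.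
  rewrite <- !INR_IZR_INZ. ring.
Qed.

Lemma rem_S al k : cf_rem al (S k) = / cf_rem al k - IZR (Int_part (/ cf_rem al k)).
Proof. reflexivity. Qed.

Lemma a_S al k : cf_a al (S k) = Z.to_nat (Int_part (/ cf_rem al k)).
Proof. reflexivity. Qed.

Lemma a_INR al k : 0 < cf_rem al k < 1 ->
  INR (cf_a al (S k)) = IZR (Int_part (/ cf_rem al k)) /\ (1 <= cf_a al (S k))%nat.
Proof.
  intros [h1 h2]. rewrite a_S.
  assert (hx : 1 < / cf_rem al k).
  { rewrite <- Rinv_1. apply Rinv_lt_contravar; lra. }
  destruct (base_Int_part (/ cf_rem al k)) as [b1 b2].
  assert (hz : (1 <= Int_part (/ cf_rem al k))%Z).
  { apply le_IZR. assert (IZR (Int_part (/ cf_rem al k)) > 0) by lra.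
    apply lt_IZR in H. apply IZR_le. lia. }
  split.
  - rewrite INR_IZR_INZ, Z2Nat.id by lia. reflexivity.
  - lia.
Qed.

Definition Hyp (al : R) := irrational al /\ 0 < al /\ al < 1.

Lemma rem_props al : Hyp al -> forall k,
  (0 < cf_rem al k < 1 /\ E al (S k) = - cf_rem al k * E al k /\ (1 <= qq al (S k))%nat).
Proof.
  intros [Hirr [H0 H1]]. induction k as [|k [[r1 r2] [HE Hq]]].
  - simpl cf_rem. unfold E, Q, P; simpl. repeat split; try lra; try lia.
  - destruct (a_INR al k (conj r1 r2)) as [ha ha1].
    destruct (base_Int_part (/ cf_rem al k)) as [b1 b2].
    rewrite rem_S.
    assert (HE2 : E al (S (S k)) = - (/ cf_rem al k - IZR (Int_part (/ cf_rem al k))) * E al (S k)).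
    { rewrite E_rec, ha.
      assert (E al k = - / cf_rem al k * E al (S k)).
      { rewrite HE. field. lra. }
      rewrite H. ring. }
    assert (Hq2 : (1 <= qq al (S (S k)))%nat).
    { rewrite qq_rec. nia. }
    assert (hne : / cf_rem al k - IZR (Int_part (/ cf_rem al k)) <> 0).
    { intro h0. rewrite h0 in HE2. apply Hirr.
      exists (P al (S (S k))), (Q al (S (S k))).
      assert (hQ : (1 <= Q al (S (S k)))%Z) by (unfold Q; lia).
      split; [lia|].
      unfold E in HE2. apply IZR_le in hQ.
      field_simplify_eq; [|lra]. lra. }
    repeat split; try lra; try assumption.
Qed.
Open Scope R_scope.

Section S.
Variable al : R.
Hypothesis H : Hyp al.

Lemma r_pos k : 0 < cf_rem al k < 1.
Proof. apply (rem_props al H k). Qed.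
Lemma E_S k : E al (S k) = - cf_rem al k * E al k.
Proof. apply (rem_props al H k). Qed.
Lemma a_ge1 k : (1 <= cf_a al (S k))%nat.
Proof. apply (a_INR al k (r_pos k)). Qed.

Lemma d_S k : d al (S k) = cf_rem al k * d al k.
Proof. unfold d. rewrite E_S, Rabs_mult, Rabs_Ropp, Rabs_pos_eq; [ring|]. pose proof (r_pos k); lra. Qed.

Lemma d_pos k : 0 < d al k.
Proof. induction k. - unfold d, E, Q, P; simpl. rewrite Rabs_left; lra.
  - rewrite d_S. pose proof (r_pos k). nra. Qed.

Lemma d_lt k : d al (S k) < d al k.
Proof. rewrite d_S. pose proof (r_pos k). pose proof (d_pos k). nra. Qed.

Lemma d_rel k : d al k = INR (cf_a al (S k)) * d al (S k) + d al (S (S k)).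
Proof.
  destruct (a_INR al k (r_pos k)) as [ha _]. rewrite ha.
  rewrite (d_S (S k)), rem_S, (d_S k). pose proof (r_pos k). field. lra.
Qed.

Lemma F4 k X Y : Rabs (X * E al (S k) + Y * E al k) = Rabs (X * d al (S k) - Y * d al k).
Proof.
  rewrite d_S, E_S. unfold d.
  replace (X * (- cf_rem al k * E al k) + Y * E al k) with (E al k * (Y - X * cf_rem al k)) by ring.
  replace (X * (cf_rem al k * Rabs (E al k)) - Y * Rabs (E al k)) with (Rabs (E al k) * (X * cf_rem al k - Y)) by ring.
  rewrite !Rabs_mult, Rabs_Rabsolu, Rabs_minus_sym. reflexivity.
Qed.

Lemma d_anti k m : (k <= m)%nat -> d al m <= d al k.
Proof. induction 1. lra. pose proof (d_lt m). lra. Qed.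
Lemma d_santi k m : (k < m)%nat -> d al m < d al k.
Proof. intros h. pose proof (d_anti (S k) m h). pose proof (d_lt k). lra. Qed.

Lemma qq0 : qq al 0 = 0%nat. Proof. reflexivity. Qed.
Lemma qq1 : qq al 1 = 1%nat. Proof. reflexivity. Qed.
Lemma pp0 : pp al 0 = 1%nat. Proof. reflexivity. Qed.
Lemma pp1 : pp al 1 = 0%nat. Proof. reflexivity. Qed.

Lemma qq_pos k : (1 <= qq al (S k))%nat.
Proof. apply (rem_props al H k). Qed.
Lemma qq_mono k : (qq al k <= qq al (S k))%nat.
Proof. destruct k. simpl; lia. rewrite qq_rec. pose proof (a_ge1 k). nia. Qed.
Lemma qq_mono' k m : (k <= m)%nat -> (qq al k <= qq al m)%nat.
Proof. induction 1. lia. pose proof (qq_mono m). lia. Qed.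
Lemma qq_grow k : (k + 1 <= qq al (S k) + qq al k)%nat.
Proof. induction k. simpl; lia. rewrite qq_rec. pose proof (a_ge1 k). pose proof (qq_pos k).
  pose proof (qq_mono k). nia. Qed.

Lemma det k : (P al k * Q al (S k) - P al (S k) * Q al k = 1 \/ P al k * Q al (S k) - P al (S k) * Q al k = -1)%Z.
Proof.
  unfold P, Q. induction k. simpl. lia.
  rewrite qq_rec, pp_rec. rewrite !Nat2Z.inj_add, !Nat2Z.inj_mul. lia.
Qed.

Lemma E_lin k (x y : Z) :
  IZR (x * Q al (S k) + y * Q al k) * al - IZR (x * P al (S k) + y * P al k) = IZR x * E al (S k) + IZR y * E al k.
Proof. unfold E. rewrite !plus_IZR, !mult_IZR. ring. Qed.

End S.
Open Scope R_scope.

Definition av al k := cf_a al (S k).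
Definition valid al k j := ((2 <= av al k)%nat /\ (1 <= j <= av al k - 1)%nat) \/ (av al k = 1%nat /\ j = 0%nat).
Definition bb al k j : nat := if (2 <=? av al k)%nat then (qq al k + j * qq al (S k))%nat else (2 * qq al k + qq al (S k))%nat.
Definition pr al k j : Z := if (2 <=? av al k)%nat then (P al k + Z.of_nat j * P al (S k))%Z else (2 * P al k + P al (S k))%Z.
Definition vv al k j : R := if (2 <=? av al k)%nat then d al k - INR j * d al (S k) else d al (S k) + 2 * d al (S (S k)).

Lemma conv_id al (p q : Z) M : (p * Z.of_nat (qq al M) = Z.of_nat (pp al M) * q)%Z ->
  (IZR q * al - IZR p) * INR (qq al M) = IZR q * E al M.
Proof.
  intro h. unfold E, Q, P. repeat rewrite <- INR_IZR_INZ.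
  apply (f_equal IZR) in h. rewrite !mult_IZR in h. repeat rewrite <- INR_IZR_INZ in h.
  nra.
Qed.

Section S.
Variable al : R.
Hypothesis H : Hyp al.

Lemma INR_qq k : INR (qq al k) = IZR (Q al k).
Proof. unfold Q. apply INR_IZR_INZ. Qed.

Lemma d_rel' k : d al k = INR (av al k) * d al (S k) + d al (S (S k)).
Proof. apply d_rel, H. Qed.

Lemma rec_val k j : valid al k j ->
  Rabs (IZR (Z.of_nat (bb al k j)) * al - IZR (pr al k j)) = vv al k j.
Proof.
  intro hv. unfold bb, pr, vv.
  pose proof (d_rel' k) as hr. pose proof (d_pos al H (S (S k))).
  pose proof (d_pos al H (S k)).
  destruct hv as [[h2 hj]|[h1 hj]].
  - assert (e : (2 <=? av al k)%nat = true) by (apply Nat.leb_le; lia). rewrite e.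
    replace (Z.of_nat (qq al k + j * qq al (S k))) with (Z.of_nat j * Q al (S k) + 1 * Q al k)%Z by (unfold Q; lia).
    replace (P al k + Z.of_nat j * P al (S k))%Z with (Z.of_nat j * P al (S k) + 1 * P al k)%Z by lia.
    rewrite E_lin, F4 by exact H. rewrite <- INR_IZR_INZ.
    assert (INR j + 1 <= INR (av al k)).
    { rewrite <- S_INR. apply le_INR. lia. }
    rewrite Rabs_left1; [ring|nra].
  - assert (e : (2 <=? av al k)%nat = false) by (apply Nat.leb_gt; lia). rewrite e.
    replace (Z.of_nat (2 * qq al k + qq al (S k))) with (1 * Q al (S k) + 2 * Q al k)%Z by (unfold Q; lia).
    replace (2 * P al k + P al (S k))%Z with (1 * P al (S k) + 2 * P al k)%Z by lia.
    rewrite E_lin, F4 by exact H. rewrite h1 in hr. simpl INR in hr.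
    rewrite Rabs_left1; lra.
Qed.

Lemma bb_ge k j : valid al k j -> (qq al (S k) <= bb al k j)%nat.
Proof.
  intro hv. unfold bb. destruct hv as [[h2 hj]|[h1 hj]].
  - rewrite (proj2 (Nat.leb_le _ _) h2). nia.
  - rewrite (proj2 (Nat.leb_gt 2 (av al k)) ltac:(lia)). lia.
Qed.

Lemma bb_ge1 k j : valid al k j -> (1 <= bb al k j)%nat.
Proof. intro hv. pose proof (bb_ge k j hv). pose proof (qq_pos al H k). lia. Qed.

Lemma rec_nc k j : valid al k j -> not_convergent al (pr al k j) (Z.of_nat (bb al k j)).
Proof.
  intros hv m heq.
  pose proof (det al k) as hdet.
  assert (hqq : qq al (S (S k)) = (av al k * qq al (S k) + qq al k)%nat) by apply qq_rec.
  pose proof (rec_val k j hv) as hval.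
  set (M := S m) in *.
  destruct (Nat.lt_trichotomy M k) as [hlt|[heqk|hgt]].
  -
    pose proof (conv_id al _ _ M heq) as hc.
    apply (f_equal Rabs) in hc. rewrite Rabs_mult, hval, (Rabs_mult (IZR _)) in hc.
    fold (d al M) in hc. rewrite Rabs_pos_eq in hc by (apply pos_INR).
    rewrite Rabs_pos_eq in hc by (apply IZR_le; lia).
    rewrite <- INR_IZR_INZ in hc.
    assert (hQ : (qq al M <= bb al k j)%nat).
    { pose proof (bb_ge k j hv). pose proof (qq_mono' al H M (S k) ltac:(lia)). lia. }
    assert (hQ1 : (1 <= qq al M)%nat) by (apply (qq_pos al H m)).
    apply le_INR in hQ. apply le_INR in hQ1. change (INR 1) with 1 in hQ1.
    assert (hdM : vv al k j < d al M).
    { unfold vv. destruct hv as [[h2 hj]|[h1 hj]].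
      - rewrite (proj2 (Nat.leb_le _ _) h2).
        pose proof (d_santi al H M k hlt). pose proof (d_pos al H (S k)).
        assert (1 <= INR j) by (apply (le_INR 1); lia). nra.
      - rewrite (proj2 (Nat.leb_gt 2 (av al k)) ltac:(lia)).
        destruct k as [|k']; [lia|].
        pose proof (d_anti al H M k' ltac:(lia)).
        pose proof (d_rel' k'). pose proof (d_rel' (S k')) as hk.
        rewrite h1 in hk. simpl INR in hk.
        assert (1 <= INR (av al k')) by (apply (le_INR 1); apply (a_ge1 al H)).
        pose proof (d_pos al H (S (S k'))). pose proof (d_pos al H (S (S (S k')))).
        pose proof (d_lt al H (S (S k'))). nra. }
    pose proof (d_pos al H M).
    assert (0 <= (INR (bb al k j) - INR (qq al M)) * d al M) by (apply Rmult_le_pos; lra).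
    assert (0 < INR (qq al M) * (d al M - vv al k j)) by (apply Rmult_lt_0_compat; lra).
    nra.
  -
    subst M. rewrite heqk in heq. unfold pr, bb in heq. fold (Q al k) (P al k) in heq.
    destruct hv as [[h2 hj]|[h1 hj]].
    + rewrite (proj2 (Nat.leb_le _ _) h2) in heq.
      rewrite Nat2Z.inj_add, Nat2Z.inj_mul in heq. fold (Q al k) (Q al (S k)) in heq. nia.
    + rewrite (proj2 (Nat.leb_gt 2 (av al k)) ltac:(lia)) in heq.
      rewrite Nat2Z.inj_add, Nat2Z.inj_mul in heq. fold (Q al k) (Q al (S k)) in heq. nia.
  - destruct (Nat.eq_dec M (S k)) as [e|ne].
    + subst M. rewrite e in heq. unfold pr, bb in heq. fold (Q al (S k)) (P al (S k)) in heq.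
      destruct hv as [[h2 hj]|[h1 hj]].
      * rewrite (proj2 (Nat.leb_le _ _) h2) in heq.
        rewrite Nat2Z.inj_add, Nat2Z.inj_mul in heq. fold (Q al k) (Q al (S k)) in heq. nia.
      * rewrite (proj2 (Nat.leb_gt 2 (av al k)) ltac:(lia)) in heq.
        rewrite Nat2Z.inj_add, Nat2Z.inj_mul in heq. fold (Q al k) (Q al (S k)) in heq. nia.
    +
      pose proof (conv_id al _ _ M heq) as hc.
      apply (f_equal Rabs) in hc. rewrite Rabs_mult, hval, (Rabs_mult (IZR _)) in hc.
      fold (d al M) in hc. rewrite Rabs_pos_eq in hc by (apply pos_INR).
      rewrite Rabs_pos_eq in hc by (apply IZR_le; lia).
      rewrite <- INR_IZR_INZ in hc.
      pose proof (qq_mono' al H (S (S k)) M ltac:(lia)) as hmo.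
      pose proof (d_anti al H (S (S k)) M ltac:(lia)) as hda.
      pose proof (d_pos al H M). pose proof (d_pos al H (S k)). pose proof (d_rel' k).
      pose proof (qq_pos al H (S k)).
      unfold bb, vv in *.
      destruct hv as [[h2 hj]|[h1 hj]].
      * rewrite (proj2 (Nat.leb_le _ _) h2) in *.
        assert (hq : (qq al k + j * qq al (S k) < qq al M)%nat) by (pose proof (qq_pos al H k); assert (j * qq al (S k) < av al k * qq al (S k))%nat by (apply Nat.mul_lt_mono_pos_r; lia); lia).
        apply lt_INR in hq.
        assert (INR j + 1 <= INR (av al k)).
        { rewrite <- S_INR. apply le_INR. lia. }
        assert (vv0 : d al (S (S k)) < d al k - INR j * d al (S k)) by nra.
        assert (0 <= INR (qq al k + j * qq al (S k))) by apply pos_INR.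
        nra.
      * rewrite (proj2 (Nat.leb_gt 2 (av al k)) ltac:(lia)) in *.
        assert (hq : (2 * qq al k + qq al (S k) <= 2 * qq al M)%nat).
        { pose proof (qq_mono al H (S k)). nia. }
        apply le_INR in hq. rewrite (mult_INR 2 (qq al M)) in hq. change (INR 2) with 2 in hq.
        assert (hQM : 1 <= INR (qq al M)) by (apply (le_INR 1); apply (qq_pos al H m)).
        assert (0 <= (2 * INR (qq al M) - INR (2 * qq al k + qq al (S k))) * d al M) by (apply Rmult_le_pos; lra).
        assert (0 <= INR (qq al M) * (d al (S (S k)) - d al M)) by (apply Rmult_le_pos; lra).
        assert (0 < INR (qq al M) * d al (S k)) by (apply Rmult_lt_0_compat; lra).
        nra.
Qed.

End S.
Open Scope R_scope.

Section S.
Variable al : R.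
Hypothesis H : Hyp al.

Lemma P_rec k : P al (S (S k)) = (Z.of_nat (av al k) * P al (S k) + P al k)%Z.
Proof. unfold P, av. rewrite pp_rec. lia. Qed.
Lemma Q_rec k : Q al (S (S k)) = (Z.of_nat (av al k) * Q al (S k) + Q al k)%Z.
Proof. unfold Q, av. rewrite qq_rec. lia. Qed.

Lemma Eabs_basis k (A B : Z) :
  Rabs (IZR (A * Q al (S k) + B * Q al k) * al - IZR (A * P al (S k) + B * P al k))
  = Rabs (IZR A * d al (S k) - IZR B * d al k).
Proof. rewrite E_lin. apply F4, H. Qed.

Lemma core p q : not_convergent al p q -> forall f k (A B : Z),
  (1 <= A)%Z -> (1 <= B)%Z -> p = (A * P al (S k) + B * P al k)%Z ->
  q = (A * Q al (S k) + B * Q al k)%Z -> (q <= Z.of_nat (k + f))%Z ->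
  exists k' j, valid al k' j /\ (Z.of_nat (bb al k' j) <= q)%Z /\ vv al k' j <= Rabs (IZR q * al - IZR p).
Proof.
  intros hnc f. induction f as [|f IH]; intros k A B hA hB hp hq hf.
  - exfalso. pose proof (qq_grow al H k). unfold Q in hq. nia.
  - pose proof (a_ge1 al H k) as ha. fold (av al k) in ha.
    pose proof (P_rec k) as hP. pose proof (Q_rec k) as hQ.
    set (a := av al k) in *.
    set (c := (A - B * Z.of_nat a)%Z).
    destruct (Z_lt_le_dec 0 c) as [cpos|cle].
    + apply (IH (S k) B c); try lia.
    + destruct (Z.eq_dec c 0) as [c0|cne].
      * exfalso. apply (hnc (S k)). fold (Q al (S (S k))) (P al (S (S k))).
        rewrite hQ, hP, hp, hq. assert (A = B * Z.of_nat a)%Z by (unfold c in c0; lia).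
        subst A. ring.
      *
        assert (hE : Rabs (IZR q * al - IZR p) = IZR B * d al (S (S k)) + IZR (- c) * d al (S k)).
        { rewrite hq, hp, Eabs_basis. pose proof (d_rel al H k) as hr. fold (av al k) a in hr.
          rewrite hr. rewrite INR_IZR_INZ in hr |- *.
          pose proof (d_pos al H (S k)). pose proof (d_pos al H (S (S k))).
          unfold c. rewrite Rabs_left1.
          - rewrite opp_IZR, minus_IZR, mult_IZR. ring.
          - assert (IZR (A - B * Z.of_nat a) <= -1) by (apply IZR_le; lia).
            rewrite minus_IZR, mult_IZR in H2. 
            assert (1 <= IZR B) by (apply IZR_le; lia). nra. }
        pose proof (d_pos al H (S k)). pose proof (d_pos al H (S (S k))).
        pose proof (qq_pos al H k).
        destruct (Z.eq_dec B 1) as [B1|B2].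
        -- subst B. exists k, (Z.to_nat A).
           assert (hv : valid al k (Z.to_nat A)) by (left; unfold c in cle, cne; lia).
           split; [exact hv|].
           assert (hb : q = Z.of_nat (bb al k (Z.to_nat A))).
           { unfold bb. fold a. rewrite (proj2 (Nat.leb_le 2 a) ltac:(unfold c in *; lia)).
             rewrite hq. unfold Q. lia. }
           assert (hpr : p = pr al k (Z.to_nat A)).
           { unfold pr. fold a. rewrite (proj2 (Nat.leb_le 2 a) ltac:(unfold c in *; lia)).
             rewrite hp. lia. }
           split; [lia|]. rewrite hb, hpr, rec_val by assumption. lra.
        -- destruct (Nat.eq_dec a 1) as [a1|a2].
           ++ exists k, 0%nat.
              assert (hv : valid al k 0) by (right; split; [exact a1|reflexivity]).
              split; [exact hv|].
              unfold bb, vv. fold a. rewrite (proj2 (Nat.leb_gt 2 a) ltac:(lia)).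
              split.
              ** rewrite hq. unfold Q. pose proof (qq_pos al H k). nia.
              ** rewrite hE. assert (2 <= IZR B) by (apply IZR_le; lia).
                 assert (1 <= IZR (- c)) by (apply IZR_le; lia).
                 assert (0 <= (IZR B - 2) * d al (S (S k))) by (apply Rmult_le_pos; lra).
                 assert (0 <= (IZR (- c) - 1) * d al (S k)) by (apply Rmult_le_pos; lra). lra.
           ++ set (m := Nat.min (Z.to_nat (- c)) (a - 1)).
              exists k, (a - m)%nat.
              assert (hv : valid al k (a - m)) by (left; unfold m; lia).
              split; [exact hv|].
              unfold bb, vv. fold a. rewrite (proj2 (Nat.leb_le 2 a) ltac:(lia)).
              split.
              ** rewrite hq. unfold Q. rewrite Nat2Z.inj_add, Nat2Z.inj_mul.
                 assert (hQQ : (Z.of_nat a * Q al (S k) <= Q al (S (S k)))%Z) by (rewrite hQ; unfold Q; lia).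
                 unfold Q in hQQ.
                 assert (hm : (Z.of_nat m = - c \/ (Z.of_nat m = Z.of_nat a - 1 /\ Z.of_nat a - 1 < - c))%Z) by (unfold m; lia).
                 unfold c in hm.
                 destruct hm as [hm|[hm1 hm2]]; rewrite Nat2Z.inj_sub by (unfold m; lia); nia.
              ** rewrite hE. pose proof (d_rel al H k) as hr. fold (av al k) a in hr.
                 rewrite minus_INR by (unfold m; lia).
                 assert (hmc : INR m <= IZR (- c)).
                 { rewrite INR_IZR_INZ. apply IZR_le. unfold m. lia. }
                 assert (2 <= IZR B) by (apply IZR_le; lia).
                 assert (0 <= INR m) by apply pos_INR.
                 nra.
Qed.

Lemma K2 p q : (1 <= q)%Z -> not_convergent al p q ->
  exists k j, valid al k j /\ (Z.of_nat (bb al k j) <= q)%Z /\ vv al k j <= Rabs (IZR q * al - IZR p).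
Proof.
  intros hq hnc.
  destruct (Z_lt_le_dec 0 p) as [pp0|pn].
  - apply (core p q hnc (Z.to_nat q) 0%nat q p); try lia.
    + unfold P; simpl. lia.
    + unfold Q; simpl. lia.
  - destruct (Z.eq_dec p 0) as [p0|pneg].
    + exfalso. apply (hnc 0%nat). subst p. simpl. lia.
    + destruct H as [_ [H0 H1]].
      assert (hE : 1 + al <= Rabs (IZR q * al - IZR p)).
      { assert (1 <= IZR q) by (apply IZR_le; lia). assert (IZR p <= -1) by (apply IZR_le; lia).
        rewrite Rabs_pos_eq; nra. }
      pose proof (d_rel al H 0) as hr. fold (av al 0) in hr.
      assert (hd0 : d al 0 = 1) by (unfold d, E, Q, P; simpl; rewrite Rabs_left; lra).
      assert (hd1 : d al 1 = al) by (unfold d, E, Q, P; simpl; rewrite Rabs_right; lra).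
      pose proof (d_pos al H 2). pose proof (d_lt al H 1).
      destruct (le_lt_dec 2 (av al 0)) as [a2|a1].
      * exists 0%nat, 1%nat. assert (hv : valid al 0 1) by (left; lia). split; [exact hv|].
        unfold bb, vv. rewrite (proj2 (Nat.leb_le 2 (av al 0)) a2). simpl. split; [lia|].
        lra.
      * pose proof (a_ge1 al H 0). fold (av al 0) in H4.
        exists 0%nat, 0%nat. assert (hv : valid al 0 0) by (right; lia). split; [exact hv|].
        unfold bb, vv. rewrite (proj2 (Nat.leb_gt 2 (av al 0)) a1). simpl. split; [lia|].
        assert (av al 0 = 1%nat) by lia. rewrite H5 in hr. simpl INR in hr. lra.
Qed.

End S.
Open Scope R_scope.

Definition jf al k : nat := if (2 <=? av al k)%nat then 1%nat else 0%nat.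
Definition jl al k : nat := if (2 <=? av al k)%nat then (av al k - 1)%nat else 0%nat.

Section S.
Variable al : R.
Hypothesis H : Hyp al.

Lemma av1 k : (1 <= av al k)%nat. Proof. apply (a_ge1 al H k). Qed.

Lemma valid_range k j : valid al k j -> (jf al k <= j <= jl al k)%nat.
Proof. unfold valid, jf, jl. intros [[h hj]|[h hj]].
  - rewrite (proj2 (Nat.leb_le 2 (av al k)) h). lia.
  - rewrite (proj2 (Nat.leb_gt 2 (av al k)) ltac:(lia)). lia. Qed.

Lemma valid_jf k : valid al k (jf al k).
Proof. pose proof (av1 k). unfold valid, jf. destruct (le_lt_dec 2 (av al k)) as [h|h].
  - rewrite (proj2 (Nat.leb_le 2 (av al k)) h). lia.
  - rewrite (proj2 (Nat.leb_gt 2 (av al k)) h). lia. Qed.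
Lemma valid_jl k : valid al k (jl al k).
Proof. pose proof (av1 k). unfold valid, jl. destruct (le_lt_dec 2 (av al k)) as [h|h].
  - rewrite (proj2 (Nat.leb_le 2 (av al k)) h). lia.
  - rewrite (proj2 (Nat.leb_gt 2 (av al k)) h). lia. Qed.

Lemma within k j j' : valid al k j -> valid al k j' -> (j < j')%nat ->
  (bb al k j < bb al k j')%nat /\ vv al k j' < vv al k j.
Proof.
  intros [[h hj]|[h hj]] hv' hjj.
  - unfold bb, vv. rewrite (proj2 (Nat.leb_le 2 (av al k)) h).
    pose proof (qq_pos al H k). pose proof (d_pos al H (S k)).
    split. nia. apply lt_INR in hjj. nra.
  - destruct hv' as [[h' _]|[_ h']]; lia.
Qed.

Lemma within_le k j j' : valid al k j -> valid al k j' -> (j <= j')%nat ->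
  (bb al k j <= bb al k j')%nat /\ vv al k j' <= vv al k j.
Proof.
  intros hv hv' hjj. destruct (Nat.eq_dec j j'). subst; split; lia || lra.
  destruct (within k j j' hv hv' ltac:(lia)). split; lia || lra.
Qed.

Lemma cross k : (bb al k (jl al k) <= bb al (S k) (jf al (S k)))%nat /\
  vv al (S k) (jf al (S k)) < vv al k (jl al k).
Proof.
  pose proof (qq_mono al H (S k)) as hm. rewrite qq_rec in hm.
  pose proof (qq_mono al H k) as hm0.
  pose proof (qq_rec al k) as hq. fold (av al k) in hq.
  pose proof (d_rel al H k) as r0. pose proof (d_rel al H (S k)) as r1.
  fold (av al k) in r0. fold (av al (S k)) in r1.
  pose proof (d_pos al H (S (S (S k)))). pose proof (d_lt al H (S (S k))).
  pose proof (d_lt al H (S k)). pose proof (av1 k). pose proof (av1 (S k)).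
  unfold bb, vv, jf, jl.
  destruct (le_lt_dec 2 (av al k)) as [h|h];
  [rewrite (proj2 (Nat.leb_le 2 (av al k)) h)|rewrite (proj2 (Nat.leb_gt 2 (av al k)) h)];
  (destruct (le_lt_dec 2 (av al (S k))) as [h'|h'];
  [rewrite (proj2 (Nat.leb_le 2 (av al (S k))) h')|rewrite (proj2 (Nat.leb_gt 2 (av al (S k))) h')]).
  - split. rewrite hq. nia. rewrite minus_INR by lia. simpl INR. lra.
  - split. rewrite hq. nia. rewrite minus_INR by lia.
    assert (av al (S k) = 1%nat) by lia. rewrite H5 in r1. simpl INR in *. lra.
  - assert (av al k = 1%nat) by lia. split. rewrite hq. nia. simpl INR. rewrite H5 in r0. simpl INR in r0. lra.
  - assert (av al k = 1%nat) by lia. assert (av al (S k) = 1%nat) by lia.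
    split. rewrite hq. nia. rewrite H5 in r0. rewrite H6 in r1. simpl INR in *. lra.
Qed.

Lemma chain k k' : (k < k')%nat -> (bb al k (jl al k) <= bb al k' (jf al k'))%nat /\
  vv al k' (jf al k') < vv al k (jl al k).
Proof.
  induction 1 as [|k' hk [IH1 IH2]].
  - apply cross.
  - destruct (cross k') as [c1 c2].
    destruct (within_le k' (jf al k') (jl al k') (valid_jf k') (valid_jl k')) as [w1 w2].
    { pose proof (valid_range k' _ (valid_jf k')). pose proof (valid_range k' _ (valid_jl k')). lia. }
    split; [lia|lra].
Qed.

Lemma lex k j k' j' : valid al k j -> valid al k' j' -> ((k < k')%nat \/ (k = k' /\ (j < j')%nat)) ->
  (bb al k j <= bb al k' j')%nat /\ vv al k' j' < vv al k j.
Proof.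
  intros hv hv' [hk|[hk hj]].
  - destruct (chain k k' hk) as [c1 c2].
    pose proof (valid_range k j hv). pose proof (valid_range k' j' hv').
    destruct (within_le k j (jl al k) hv (valid_jl k) ltac:(lia)).
    destruct (within_le k' (jf al k') j' (valid_jf k') hv' ltac:(lia)).
    split; [lia|lra].
  - subst k'. destruct (within k j j' hv hv' hj). split; [lia|lra].
Qed.

Lemma K3 k j k' j' : valid al k j -> valid al k' j' -> (bb al k j < bb al k' j')%nat ->
  vv al k' j' < vv al k j.
Proof.
  intros hv hv' hb.
  destruct (lt_eq_lt_dec k k') as [[hk|hk]|hk].
  - apply (lex k j k' j' hv hv' (or_introl hk)).
  - subst k'. destruct (lt_eq_lt_dec j j') as [[hj|hj]|hj].
    + apply (lex k j k j' hv hv' (or_intror (conj eq_refl hj))).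
    + subst; lia.
    + destruct (lex k j' k j hv' hv (or_intror (conj eq_refl hj))). lia.
  - destruct (lex k' j' k j hv' hv (or_introl hk)). lia.
Qed.

End S.
Open Scope R_scope.

Definition inS al y := exists k j, valid al k j /\ bb al k j = y.

Lemma list_min {A : Type} (l : list A) (Pp : A -> Prop) (f : A -> R) :
  (exists x, In x l /\ Pp x) -> exists x, In x l /\ Pp x /\ forall y, In y l -> Pp y -> f x <= f y.
Proof.
  induction l as [|a l IH]; intros [x [hx hp]]; [destruct hx|].
  destruct (classic (exists x, In x l /\ Pp x)) as [ex|nex].
  - destruct (IH ex) as [m [hm1 [hm2 hm3]]].
    destruct (classic (Pp a)) as [pa|npa].
    + destruct (Rle_dec (f a) (f m)) as [le|gt].
      * exists a. split; [left; auto|]. split; auto. intros y [<-|hy] py; [lra|]. specialize (hm3 y hy py). lra.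
      * exists m. split; [right; auto|]. split; auto. intros y [<-|hy] py; [lra|]. auto.
    + exists m. split; [right; auto|]. split; auto. intros y [<-|hy] py; [contradiction|]. auto.
  - destruct hx as [<-|hx]; [|exfalso; apply nex; eauto].
    exists a. split; [left; auto|]. split; auto. intros y [<-|hy] py; [lra|]. exfalso; apply nex; eauto.
Qed.

Section S.
Variable al : R.
Hypothesis H : Hyp al.

Lemma adm_iff T p q : admissible al (INR T) p q <-> ((1 <= q)%Z /\ (q <= Z.of_nat T)%Z /\ not_convergent al p q).
Proof.
  unfold admissible. rewrite INR_IZR_INZ. split.
  - intros [h1 [h2 h3]]. apply le_IZR in h2. auto.
  - intros [h1 [h2 h3]]. apply IZR_le in h2. auto.
Qed.

Lemma rec_adm T k j : valid al k j -> (bb al k j <= T)%nat -> admissible al (INR T) (pr al k j) (Z.of_nat (bb al k j)).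
Proof.
  intros hv hb. apply adm_iff. pose proof (bb_ge1 al H k j hv). split; [lia|]. split; [lia|].
  apply rec_nc; auto.
Qed.

Lemma bb_first : bb al 0 (jf al 0) = 1%nat.
Proof. unfold bb, jf. destruct (2 <=? av al 0)%nat; reflexivity. Qed.

Lemma psi_exists T : (1 <= T)%nat -> exists m, is_psi2star al (INR T) m.
Proof.
  intro hT.
  set (L := list_prod (seq 0 (2 * T + 2)) (seq 0 (2 * T + 2))).
  destruct (list_min L (fun x => valid al (fst x) (snd x) /\ (bb al (fst x) (snd x) <= T)%nat)
             (fun x => vv al (fst x) (snd x))) as [[k0 j0] [hin [[hv hb] hmin]]].
  { exists (0%nat, jf al 0). split.
    - apply in_prod; apply in_seq; unfold jf; destruct (2 <=? av al 0)%nat; lia.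
    - split; [apply valid_jf; auto|]. simpl. rewrite bb_first. lia. }
  simpl in *. exists (vv al k0 j0). split.
  - exists (pr al k0 j0), (Z.of_nat (bb al k0 j0)). split; [apply rec_adm; auto|].
    apply rec_val; auto.
  - intros p q hadm. pose proof hadm as hadm'. apply adm_iff in hadm as [h1 [h2 h3]].
    destruct (K2 al H p q h1 h3) as [k [j [hv' [hb' hvv]]]].
    enough (vv al k0 j0 <= vv al k j) by lra.
    apply (hmin (k, j)); [|simpl; split; auto; lia].
    assert (hk : (k <= 2 * T + 1)%nat).
    { pose proof (bb_ge al k j hv'). pose proof (qq_grow al H k). pose proof (qq_mono al H k). lia. }
    assert (hj : (j <= T)%nat).
    { unfold valid in hv'. unfold bb in hb'. destruct hv' as [[ha hjj]|[ha hjj]]; [|lia].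
      rewrite (proj2 (Nat.leb_le 2 (av al k)) ha) in hb'. pose proof (qq_pos al H k). nia. }
    apply in_prod; apply in_seq; lia.
Qed.

Lemma psi_le t m p q : is_psi2star al t m -> admissible al t p q -> m <= Rabs (IZR q * al - IZR p).
Proof. intros [_ h] ha. apply h; auto. Qed.

Lemma inX_iff t : inX al t <-> inS al t.
Proof.
  split.
  - intros [h1|[h2 [m1 [m2 [hm1 [hm2 hlt]]]]]].
    + subst. exists 0%nat, (jf al 0). split; [apply valid_jf; auto|apply bb_first].
    + destruct hm1 as [[p [q [hadm heq]]] _].
      apply adm_iff in hadm as [q1 [q2 q3]].
      destruct (K2 al H p q q1 q3) as [k [j [hv [hb hvv]]]].
      destruct (Nat.eq_dec (bb al k j) t) as [e|ne]; [exists k, j; auto|].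
      exfalso.
      assert (hr : INR t - 1 = INR (t - 1)) by (rewrite minus_INR by lia; reflexivity).
      rewrite hr in hm2.
      pose proof (psi_le _ _ _ _ hm2 (rec_adm (t - 1) k j hv ltac:(lia))).
      rewrite rec_val in H0 by auto. lra.
  - intros [k [j [hv hb]]].
    pose proof (bb_ge1 al H k j hv).
    destruct (Nat.eq_dec t 1) as [e|ne]; [left; auto|right].
    split; [lia|].
    destruct (psi_exists t ltac:(lia)) as [m1 hm1].
    destruct (psi_exists (t - 1) ltac:(lia)) as [m2 hm2].
    exists m1, m2.
    assert (hr : INR t - 1 = INR (t - 1)) by (rewrite minus_INR by lia; reflexivity).
    rewrite hr. split; [auto|]. split; [auto|].
    pose proof (psi_le _ _ _ _ hm1 (rec_adm t k j hv ltac:(lia))) as l1.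
    rewrite rec_val in l1 by auto.
    destruct hm2 as [[p [q [hadm heq]]] _].
    apply adm_iff in hadm as [q1 [q2 q3]].
    destruct (K2 al H p q q1 q3) as [k' [j' [hv' [hb' hvv']]]].
    pose proof (K3 al H k' j' k j hv' hv ltac:(lia)). lra.
Qed.

End S.
Open Scope nat_scope.

Lemma SS_app {A} (R : A -> A -> Prop) l1 l2 : StronglySorted R l1 -> StronglySorted R l2 ->
  (forall x y, In x l1 -> In y l2 -> R x y) -> StronglySorted R (l1 ++ l2).
Proof.
  induction l1 as [|a l1 IH]; intros h1 h2 h; simpl; auto.
  apply StronglySorted_inv in h1 as [h1 h1']. constructor.
  - apply IH; auto. intros; apply h; simpl; auto.
  - apply Forall_app. split; auto. apply Forall_forall. intros y hy. apply h; simpl; auto.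
Qed.

Lemma SS_map_seq (f : nat -> nat) s n : (forall i j, i <= j -> f i <= f j) ->
  StronglySorted le (map f (seq s n)).
Proof.
  intro hf. revert s. induction n; intro s; simpl; constructor; auto.
  apply Forall_forall. intros y hy. apply in_map_iff in hy as [i [<- hi]]. apply in_seq in hi. apply hf. lia.
Qed.

Lemma dedup_in seen l y : In y (dedup_aux seen l) <-> In y l /\ ~ In y seen.
Proof.
  revert seen. induction l as [|x l IH]; intro seen; simpl. tauto.
  destruct (existsb (Nat.eqb x) seen) eqn:e.
  - apply existsb_exists in e as [z [hz ez]]. apply Nat.eqb_eq in ez. subst z.
    rewrite IH. split; [tauto|]. intros [[<-|h] h']; [contradiction|auto].
  - assert (~ In x seen).
    { intro hi. assert (existsb (Nat.eqb x) seen = true) by (apply existsb_exists; exists x; split; auto; apply Nat.eqb_refl). congruence. }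
    simpl. rewrite IH. simpl. split.
    + intros [<-|[h1 h2]]; [tauto|]. split; [auto|tauto].
    + intros [[<-|h1] h2]; [auto|]. destruct (Nat.eq_dec x y); [left; auto|right; split; auto].
      intros [e'|e']; [congruence|contradiction].
Qed.

Lemma dedup_sorted seen l : StronglySorted le l -> StronglySorted lt (dedup_aux seen l).
Proof.
  revert seen. induction l as [|x l IH]; intros seen hs; simpl. constructor.
  apply StronglySorted_inv in hs as [hs hf].
  destruct (existsb (Nat.eqb x) seen). auto.
  constructor. auto. apply Forall_forall. intros y hy. apply dedup_in in hy as [h1 h2].
  rewrite Forall_forall in hf. specialize (hf y h1). destruct (Nat.eq_dec x y); [subst; exfalso; apply h2; left; auto|lia].
Qed.

Lemma SS_nodup l : StronglySorted lt l -> NoDup l.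
Proof.
  induction 1; constructor; auto. intro hi. rewrite Forall_forall in H0. specialize (H0 a hi). lia.
Qed.

Lemma filter_nil' {A} (f : A -> bool) l : (forall x, In x l -> f x = false) -> filter f l = [].
Proof. induction l as [|a l IH]; intro h; simpl; auto. rewrite h by (left; auto). apply IH. intros; apply h; right; auto. Qed.

Lemma nth_sorted L j x : StronglySorted lt L ->
  (nth_error L j = Some x <-> In x L /\ length (filter (fun y => y <? x) L) = j).
Proof.
  intro hs. revert j. induction hs as [|h t hs IH hf]; intro j.
  - destruct j; simpl; split; try discriminate; tauto.
  - rewrite Forall_forall in hf.
    assert (hfil0 : forall z, (z <= h)%nat -> filter (fun y => y <? z) t = []).
    { intros z hz. apply filter_nil'. intros y hy. apply Nat.ltb_ge. specialize (hf y hy). lia. }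
    destruct j as [|j]; simpl.
    + split.
      * intro e. inversion e. subst. split; [left; auto|]. rewrite Nat.ltb_irrefl, hfil0; auto.
      * intros [[<-|hx] hl].
        -- reflexivity.
        -- specialize (hf x hx). rewrite (proj2 (Nat.ltb_lt h x) hf) in hl. discriminate.
    + rewrite IH. split.
      * intros [hx hl]. specialize (hf x hx). split; [right; auto|].
        rewrite (proj2 (Nat.ltb_lt h x) hf). simpl. congruence.
      * intros [[<-|hx] hl].
        -- rewrite Nat.ltb_irrefl, hfil0 in hl; auto. discriminate.
        -- specialize (hf x hx). rewrite (proj2 (Nat.ltb_lt h x) hf) in hl. simpl in hl.
           split; auto.
Qed.

Open Scope R_scope.
Section S.
Variable al : R.
Hypothesis H : Hyp al.

Lemma block_eq k : block al (S k) =
  if (2 <=? av al k)%nat then map (fun j => (qq al k + j * qq al (S k))%nat) (seq 1 (av al k - 1))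
  else [(2 * qq al k + qq al (S k))%nat].
Proof. reflexivity. Qed.

Lemma in_block k y : In y (block al (S k)) <-> exists j, valid al k j /\ bb al k j = y.
Proof.
  rewrite block_eq. unfold valid, bb. pose proof (av1 al H k).
  destruct (le_lt_dec 2 (av al k)) as [h|h].
  - rewrite (proj2 (Nat.leb_le 2 (av al k)) h). rewrite in_map_iff. split.
    + intros [j [<- hj]]. apply in_seq in hj. exists j. split; [left; lia|auto].
    + intros [j [[[_ hj]|[hj _]] <-]]; [|lia]. exists j. split; auto. apply in_seq. lia.
  - rewrite (proj2 (Nat.leb_gt 2 (av al k)) h). simpl. split.
    + intros [<-|[]]. exists 0%nat. split; [right; lia|auto].
    + intros [j [_ <-]]. left; auto.
Qed.

Lemma in_prefix N y : In y (blocks_prefix al N) <-> exists k j, (k < N)%nat /\ valid al k j /\ bb al k j = y.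
Proof.
  unfold blocks_prefix. rewrite in_concat. split.
  - intros [b [hb hy]]. apply in_map_iff in hb as [n [<- hn]]. apply in_seq in hn.
    destruct n as [|k]; [lia|]. apply in_block in hy as [j [hv hj]]. exists k, j. split; [lia|auto].
  - intros [k [j [hk [hv hj]]]]. exists (block al (S k)). split.
    + apply in_map_iff. exists (S k). split; auto. apply in_seq. lia.
    + apply in_block. eauto.
Qed.

Lemma prefix_sorted N : StronglySorted le (blocks_prefix al N).
Proof.
  induction N.
  - constructor.
  - unfold blocks_prefix. rewrite seq_S, map_app, concat_app. simpl. rewrite app_nil_r.
    apply SS_app; auto.
    + rewrite block_eq. destruct (2 <=? av al N)%nat.
      * apply SS_map_seq. intros. nia.
      * repeat constructor.
    + intros x y hx hy. apply in_prefix in hx as [k [j [hk [hv <-]]]].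
      replace (1 + N)%nat with (S N) in hy by lia.
      apply in_block in hy as [j' [hv' <-]].
      apply (lex al H k j N j' hv hv'). auto.
Qed.

Lemma L_sorted N : StronglySorted lt (dedup_first (blocks_prefix al N)).
Proof. apply dedup_sorted, prefix_sorted. Qed.

Lemma L_in N y : In y (dedup_first (blocks_prefix al N)) <-> In y (blocks_prefix al N).
Proof. unfold dedup_first. rewrite dedup_in. simpl. tauto. Qed.

Lemma L_down N x y : In x (dedup_first (blocks_prefix al N)) -> inS al y -> (y < x)%nat ->
  In y (dedup_first (blocks_prefix al N)).
Proof.
  intros hx [k [j [hv <-]]] hlt. apply L_in in hx. apply L_in.
  apply in_prefix in hx as [k0 [j0 [hk0 [hv0 <-]]]].
  apply in_prefix. exists k, j. split; auto.
  destruct (le_lt_dec N k); [|auto].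
  assert (hkk : (k0 < k)%nat) by lia. destruct (lex al H k0 j0 k j hv0 hv (or_introl hkk)). lia.
Qed.

Lemma filter_spec N x y : In x (dedup_first (blocks_prefix al N)) ->
  (In y (filter (fun z => z <? x) (dedup_first (blocks_prefix al N))) <-> (y < x)%nat /\ inX al y).
Proof.
  intro hx. rewrite filter_In, Nat.ltb_lt, inX_iff by auto. split.
  - intros [h1 h2]. split; auto. apply L_in, in_prefix in h1 as [k [j [_ [hv e]]]]. exists k, j; auto.
  - intros [h1 h2]. split; auto. apply (L_down N x y); auto.
Qed.

End S.

Theorem mainTheorem9 (alpha : R) (Hirr : irrational alpha) (H0 : 0 < alpha) (H1 : alpha < 1) :
  forall j x : nat, C_dedup_nth alpha j x <-> X_nth alpha j x.
Proof.
  assert (H : Hyp alpha) by (repeat split; auto).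
  intros j x. split.
  - intros [N hN]. apply nth_sorted in hN as [hx hl]; [|apply L_sorted; auto].
    split.
    + apply inX_iff; auto. apply L_in, in_prefix in hx as [k [j' [_ [hv e]]]]; auto. exists k, j'; auto.
    + exists (filter (fun z => z <? x) (dedup_first (blocks_prefix alpha N))). split; [|split; auto].
      * apply NoDup_filter, SS_nodup, L_sorted; auto.
      * intro y. apply filter_spec; auto.
  - intros [hX [l [hnd [hl hlen]]]].
    apply inX_iff in hX as [k [j0 [hv e]]]; auto.
    exists (S k).
    assert (hx : In x (dedup_first (blocks_prefix alpha (S k)))).
    { apply L_in, in_prefix; auto. exists k, j0. split; auto. }
    apply nth_sorted; [apply L_sorted; auto|]. split; auto.
    set (F := filter (fun z => z <? x) (dedup_first (blocks_prefix alpha (S k)))).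
    assert (hF : NoDup F) by (apply NoDup_filter, SS_nodup, L_sorted; auto).
    assert (i1 : incl F l) by (intros y hy; apply hl; apply (filter_spec alpha H (S k) x y hx); auto).
    assert (i2 : incl l F) by (intros y hy; apply (filter_spec alpha H (S k) x y hx); apply hl; auto).
    pose proof (NoDup_incl_length hF i1). pose proof (NoDup_incl_length hnd i2). lia.
Qed.
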